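(* Let $K$ be a field of characteristic $0$, let $S=K[x_1,\ldots,x_n]$ be graded by $\deg x_i=a_i>0$, and let $I\subsetneq S$ be a graded ideal which is strongly Golod, i.e. $\partial(I)^2\subseteq I$, where $\partial(I)$ is the ideal generated by all $\partial f/\partial x_i$ with $f\in I$, $1\le i\le n$. Let $P$ be a homogeneous prime ideal of $S$ containing $I$. Then $I+P^k$ is strongly Golod (i.e. $\partial(I+P^k)^2\subseteq I+P^k$) for all $k\ge2$. *)

(* Defs.v *)
From HB Require Import structures.
From mathcomp Require Import all_boot all_order all_algebra.
From mathcomp Require Export mpoly.
Set Implicit Arguments. Unset Strict Implicit. Unset Printing Implicit Defensive.
Import GRing.Theory.
Local Open Scope ring_scope.

Section Defs.
Variables (K : fieldType) (n : nat).
Notation S := {mpoly K[n]}.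

Definition pset := S -> Prop.

Definition subset_of (A B : pset) : Prop := forall x, A x -> B x.

Definition is_ideal (I : pset) : Prop :=
  [/\ I 0, (forall x y, I x -> I y -> I (x + y)) & (forall r x, I x -> I (r * x))].

Definition is_proper_ideal (I : pset) : Prop := is_ideal I /\ ~ I 1.

Definition gen_ideal (A : pset) : pset :=
  fun x => forall J, is_ideal J -> subset_of A J -> J x.

Definition ideal_add (I J : pset) : pset := gen_ideal (fun x => I x \/ J x).

Definition ideal_mul (I J : pset) : pset :=
  gen_ideal (fun x => exists a b, [/\ I a, J b & x = a * b]).

Fixpoint ideal_pow (P : pset) (k : nat) : pset :=
  match k with
  | 0%N => fun _ => True
  | k'.+1 => ideal_mul (ideal_pow P k') P
  end.

Definition deriv_ideal (I : pset) : pset :=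
  gen_ideal (fun g => exists f i, I f /\ g = f^`M(i)).

Definition strongly_golod (I : pset) : Prop :=
  subset_of (ideal_mul (deriv_ideal I) (deriv_ideal I)) I.

Definition wdeg (a : 'I_n -> nat) (m : 'X_{1..n}) : nat := (\sum_(i < n) a i * m i)%N.

Definition hcomp (a : 'I_n -> nat) (d : nat) (p : S) : S :=
  \sum_(m <- msupp p | wdeg a m == d) p@_m *: 'X_[m].

Definition graded_ideal (a : 'I_n -> nat) (I : pset) : Prop :=
  is_ideal I /\ forall f d, I f -> I (hcomp a d f).

Definition is_prime_ideal (P : pset) : Prop :=
  is_proper_ideal P /\ forall x y, P (x * y) -> P x \/ P y.

End Defs.

Arguments subset_of {K n}. Arguments is_ideal {K n}. Arguments is_proper_ideal {K n}.
Arguments gen_ideal {K n}. Arguments ideal_add {K n}. Arguments ideal_mul {K n}.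
Arguments ideal_pow {K n}. Arguments deriv_ideal {K n}. Arguments strongly_golod {K n}.
Arguments wdeg {n}. Arguments hcomp {K n}. Arguments graded_ideal {K n}.
Arguments is_prime_ideal {K n}.

(* Main.v *)
Require Import Defs.
From HB Require Import structures.
From mathcomp Require Import all_boot all_order all_algebra.
From mathcomp Require Import mpoly.
Local Open Scope ring_scope.
Import GRing.Theory.

Section Helpers.
Variables (K : fieldType) (n : nat).
Notation S := {mpoly K[n]}.

Lemma gen_is_ideal (A : pset K n) : is_ideal (gen_ideal A).
Proof.
split.
- by move=> J [H0 _ _] _.
- by move=> x y Hx Hy J HJ HA; case: (HJ) => _ HD _; apply: HD; [apply: Hx|apply: Hy].
- by move=> r x Hx J HJ HA; case: (HJ) => _ _ HM; apply: HM; apply: Hx.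
Qed.

Lemma gen_incl (A : pset K n) x : A x -> gen_ideal A x.
Proof. by move=> Ax J _ HA; apply: HA. Qed.

Lemma gen_min (A J : pset K n) : is_ideal J -> subset_of A J -> subset_of (gen_ideal A) J.
Proof. by move=> HJ HA x Hx; apply: Hx. Qed.

Lemma ideal_mulr (J : pset K n) r x : is_ideal J -> J x -> J (x * r).
Proof. by move=> [_ _ HM] Hx; rewrite mulrC; apply: HM. Qed.

Lemma prod_gen (A B J : pset K n) : is_ideal J ->
  (forall x y, A x -> B y -> J (x * y)) ->
  subset_of (ideal_mul (gen_ideal A) (gen_ideal B)) J.
Proof.
move=> HJ HAB; apply: gen_min => // z [x [y [Hx Hy ->]]].
have H1 : forall b, B b -> forall x, gen_ideal A x -> J (x * b).
  move=> b Bb; apply: gen_min; last by move=> u Au; apply: HAB.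
  case: HJ => H0 HD HM; split.
  - by rewrite mul0r.
  - by move=> u v Hu Hv; rewrite mulrDl; apply: HD.
  - by move=> r u Hu; rewrite -mulrA; apply: HM.
have : subset_of (gen_ideal B) (fun y => J (x * y)).
  apply: gen_min; last by move=> b Bb; apply: H1.
  case: HJ => H0 HD HM; split.
  - by rewrite mulr0.
  - by move=> u v Hu Hv; rewrite mulrDr; apply: HD.
  - by move=> r u Hu; rewrite mulrCA; apply: HM.
by apply.
Qed.

Lemma pow_ideal (P : pset K n) k : is_ideal (ideal_pow P k).
Proof. by case: k => [|k] /=; [split|apply: gen_is_ideal]. Qed.

Lemma pow_succ_sub (P : pset K n) k : is_ideal P ->
  subset_of (ideal_pow P k.+1) (ideal_pow P k).
Proof.
move=> HP; apply: gen_min; first exact: pow_ideal.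
by move=> z [x [y [Hx Hy ->]]]; apply: ideal_mulr => //; apply: pow_ideal.
Qed.

Lemma pow_sub_P (P : pset K n) k : is_ideal P ->
  subset_of (ideal_pow P k.+1) P.
Proof.
move=> HP; apply: gen_min => // z [x [y [Hx Hy ->]]].
by case: HP => _ _ HM; apply: HM.
Qed.

Lemma pow_gen (P : pset K n) k x y : ideal_pow P k x -> P y -> ideal_pow P k.+1 (x * y).
Proof. by move=> Hx Hy; apply: gen_incl; exists x, y. Qed.

Lemma deriv_pow (P : pset K n) m : is_ideal P ->
  forall f, ideal_pow P m.+1 f -> forall i, ideal_pow P m (f^`M(i)).
Proof.
move=> HP; elim: m => [|m IH] f Hf i; first by [].
have HT : subset_of (ideal_pow P m.+2)
   (fun f => ideal_pow P m.+2 f /\ forall i, ideal_pow P m.+1 (f^`M(i))).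
  apply: gen_min.
  - have [H0 HD HM] := pow_ideal P m.+2; have [H0' HD' HM'] := pow_ideal P m.+1.
    split.
    + by split => // j; rewrite mderiv0.
    + move=> u v [Hu Hu'] [Hv Hv']; split; first exact: HD.
      by move=> j; rewrite mderivD; apply: HD'.
    + move=> r u [Hu Hu']; split; first exact: HM.
      move=> j; rewrite mderivM; apply: HD'; last exact: HM'.
      by apply: HM'; apply: pow_succ_sub.
  - move=> z [x [y [Hx Hy ->]]]; split; first exact: pow_gen.
    move=> j; rewrite mderivM; have [_ HD' HM'] := pow_ideal P m.+1; apply: HD'.
    + by apply: pow_gen => //; apply: IH.
    + by rewrite mulrC; apply: HM'; exact: Hx.
by case: (HT f Hf).
Qed.

End Helpers.

Theorem corollary2p2 (K : fieldType) (n : nat) (a : 'I_n -> nat)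
    (I P : pset K n) :
  [pchar K] =i pred0 ->
  (forall i, (0 < a i)%N) ->
  graded_ideal a I -> is_proper_ideal I -> strongly_golod I ->
  graded_ideal a P -> is_prime_ideal P -> subset_of I P ->
  forall k : nat, (2 <= k)%N -> strongly_golod (ideal_add I (ideal_pow P k)).
Proof.
move=> _ _ [HI _] _ HG [HP _] [_ Hprime] HIP [|[|m]] // _.
set J := ideal_add I _.
have HJ : is_ideal J by apply: gen_is_ideal.
pose G := fun g : {mpoly K[n]} =>
  [\/ exists f i, I f /\ g = f^`M(i), I g | ideal_pow P m.+1 g].
pose Q := gen_ideal G.
have HQ : is_ideal Q by apply: gen_is_ideal.
have JQ : subset_of J Q.
  apply: gen_min => // x [Ix|Px]; apply: gen_incl; [by constructor 2|].
  by constructor 3; apply: pow_succ_sub.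
have DQ : subset_of (deriv_ideal J) Q.
  apply: gen_min => //.
  have HT : subset_of J (fun f => Q f /\ forall i, Q (f^`M(i))).
    apply: gen_min.
    - have [H0 HD HM] := HQ; split.
      + by split => // j; rewrite mderiv0.
      + move=> u v [Hu Hu'] [Hv Hv']; split; first exact: HD.
        by move=> j; rewrite mderivD; apply: HD.
      + move=> r u [Hu Hu']; split; first exact: HM.
        by move=> j; rewrite mderivM; apply: HD; apply: HM.
    - move=> x [Ix|Px]; split.
      + by apply: JQ; apply: gen_incl; left.
      + by move=> j; apply: gen_incl; constructor 1; exists x, j.
      + by apply: JQ; apply: gen_incl; right.
      + by move=> j; apply: gen_incl; constructor 3; apply: deriv_pow.
  by move=> g [f [i [Jf ->]]]; case: (HT f Jf).
have DP : forall f i, I f -> P (f^`M(i)).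
  move=> f i If.
  have : P (f^`M(i) * f^`M(i)).
    by apply: HIP; apply: HG; apply: gen_incl; exists (f^`M(i)), (f^`M(i));
       split => //; apply: gen_incl; exists f, i.
  by case/Hprime.
have JI : forall x, I x -> J x by move=> x Ix; apply: gen_incl; left.
have JP : forall x, ideal_pow P m.+2 x -> J x by move=> x Px; apply: gen_incl; right.
have HIi := HI; case: HIi => _ _ HIM.
have PP : forall x, ideal_pow P m.+1 x -> P x by apply: pow_sub_P.
have key : forall x y, G x -> G y -> J (x * y).
  move=> x y [[f [i [If ->]]]|Ix|Px] [[g [j [Ig ->]]]|Iy|Py].
  - apply: JI; apply: HG; apply: gen_incl; exists (f^`M(i)), (g^`M(j)).
    by split => //; apply: gen_incl; [exists f, i| exists g, j].
  - by apply: JI; apply: HIM.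
  - by apply: JP; rewrite mulrC; apply: pow_gen => //; apply: DP.
  - by apply: JI; apply: ideal_mulr.
  - by apply: JI; apply: ideal_mulr.
  - by apply: JI; apply: ideal_mulr.
  - by apply: JP; apply: pow_gen => //; apply: DP.
  - by apply: JI; apply: HIM.
  - by apply: JP; apply: pow_gen => //; apply: PP.
move=> z Hz.
have := @prod_gen K n G G J HJ key; apply.
move: Hz; apply: gen_min; first exact: gen_is_ideal.
move=> w [x [y [Hx Hy ->]]]; apply: gen_incl; exists x, y; split => //; exact: DQ.
Qed.
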